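(* Let $x\ge3$ be a fixed integer. Let $\omega_n^-(x)$ be the number of square-free words of length $n$ over an $x$-letter alphabet, and $\psi_n(x)$ the number of those which contain every one of the $x$ letters. Then $$\lim_{n\to\infty}\frac{\log\psi_n(x)}{n}=\lim_{n\to\infty}\frac{\log\omega_n^-(x)}{n}.$$
   Context: A square is a nonempty word of the form $uu$; a word is square-free if no contiguous subword of it is a square. *)

(* Defs.v *)
From mathcomp Require Import all_boot.
From Stdlib Require Import Reals.
Set Implicit Arguments. Unset Strict Implicit. Unset Printing Implicit Defensive.

(* A word over T is a seq T.  The contiguous subword of w starting at
   position i of length 2l is the square uu (u nonempty, |u| = l) iff
   l > 0, i + 2l <= |w| and w[i..i+l) = w[i+l..i+2l). *)
Definition squarefree (T : eqType) (w : seq T) : bool :=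
  [forall i : 'I_(size w).+1, forall l : 'I_(size w).+1,
     ((0 < l) && (i + l + l <= size w))%N ==>
       (take l (drop i w) != take l (drop (i + l) w))].

Definition omega_minus (x n : nat) : nat :=
  #|[set t : n.-tuple 'I_x | squarefree t]|.

Definition psi (x n : nat) : nat :=
  #|[set t : n.-tuple 'I_x | squarefree t && [forall a : 'I_x, a \in t]]|.

(* Main.v *)
Require Import Defs.
From mathcomp Require Import all_boot.
From Stdlib Require Import Reals.
From Stdlib Require Import Lra Lia Classical.
From mathcomp Require Import zify.

Section RealPart.
Local Open Scope R_scope.

Lemma ln0 : ln 0 = 0.
Proof. unfold ln; case (Rlt_dec 0 0); intro r; [destruct (Rlt_irrefl _ r) | reflexivity]. Qed.

Lemma ln_le' x y : 0 < x -> x <= y -> ln x <= ln y.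
Proof.
intros Hx Hxy; destruct (Rle_lt_or_eq_dec _ _ Hxy) as [H|H].
- left; apply ln_increasing; auto.
- rewrite H; lra.
Qed.

Lemma Rdiv_le_0_compat' a b : 0 <= a -> 0 < b -> 0 <= a / b.
Proof. intros; apply Rmult_le_pos; [auto | left; apply Rinv_0_lt_compat; auto]. Qed.

Lemma fekete (a : nat -> R) :
  (forall n, 0 <= a n) -> (forall m n, a (m + n)%nat <= a m + a n) ->
  exists L, Un_cv (fun n => a n / INR n) L.
Proof.
intros Hpos Hsub.
set (E := fun y => exists n, (0 < n)%coq_nat /\ y = - (a n / INR n)).
assert (HB : bound E).
{ exists 0; intros y [n [Hn ->]].
  assert (0 < INR n) by (apply lt_0_INR; lia).
  assert (0 <= a n / INR n) by (apply Rdiv_le_0_compat'; auto). lra. }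
assert (HE : exists y, E y) by (exists (- (a 1%nat / INR 1)); exists 1%nat; split; auto).
destruct (completeness E HB HE) as [M [HM1 HM2]].
set (L := - M). exists L.
assert (Hlow : forall n, (0 < n)%coq_nat -> L <= a n / INR n).
{ intros n Hn. assert (E (- (a n / INR n))) by (exists n; auto).
  apply HM1 in H. unfold L; lra. }
intros eps Heps.
assert (Hn0 : exists n0, (0 < n0)%coq_nat /\ a n0 / INR n0 < L + eps / 2).
{ apply NNPP; intro Hc.
  assert (Hub : is_upper_bound E (M - eps / 2)).
  { intros y [n [Hn ->]].
    assert (~ (a n / INR n < L + eps / 2)) by (intro; apply Hc; exists n; auto).
    unfold L in *; lra. }
  apply HM2 in Hub; lra. }
destruct Hn0 as [n0 [Hn0 Ht]].
set (t := a n0 / INR n0) in *.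
assert (HINRn0 : 0 < INR n0) by (apply lt_0_INR; lia).
assert (Ht0 : 0 <= t) by (apply Rdiv_le_0_compat'; auto).
assert (Ha1 : forall r, a r <= a 0%nat + INR r * a 1%nat).
{ induction r as [|r IH]. simpl; lra.
  replace (S r) with (r + 1)%nat by lia.
  rewrite plus_INR; simpl. pose proof (Hsub r 1%nat). nra. }
set (B := a 0%nat + INR n0 * a 1%nat).
assert (HB0 : 0 <= B) by (pose proof (Hpos 0%nat); pose proof (Hpos 1%nat); pose proof (pos_INR n0); unfold B; nra).
assert (Hr : forall r, (r <= n0)%coq_nat -> a r <= B).
{ intros r Hr. pose proof (Ha1 r). apply le_INR in Hr. pose proof (Hpos 1%nat). unfold B; nra. }
assert (Hq : forall q r, a (q * n0 + r)%nat <= INR q * a n0 + a r).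
{ induction q as [|q IH]; intros r. replace (0 * n0 + r)%nat with r by lia. simpl; lra.
  replace (S q * n0 + r)%nat with (n0 + (q * n0 + r))%nat by lia.
  rewrite S_INR. pose proof (Hsub n0 (q * n0 + r)%nat). pose proof (IH r). lra. }
destruct (archimed_cor1 (eps / (2 * (B + 1)))) as [N [HN HN0]].
{ apply Rdiv_lt_0_compat; lra. }
exists N. intros n Hn. unfold R_dist.
assert (Hn' : (0 < n)%coq_nat) by lia.
assert (HINRn : 0 < INR n) by (apply lt_0_INR; lia).
pose proof (Hlow n Hn').
assert (Hup : a n / INR n < L + eps).
{ set (q := (n / n0)%nat). set (r := (n mod n0)%nat).
  assert (Hdm : n = (q * n0 + r)%nat) by (unfold q, r; pose proof (Nat.div_mod n n0 ltac:(lia)); lia).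
  assert (Hrl : (r < n0)%coq_nat) by (unfold r; apply Nat.mod_upper_bound; lia).
  assert (Hqn : INR q * INR n0 <= INR n).
  { rewrite -mult_INR. apply le_INR. lia. }
  assert (Han : a n <= INR n * t + B).
  { replace (a n) with (a (q * n0 + r)%nat) by (rewrite -Hdm; reflexivity). pose proof (Hq q r). pose proof (Hr r ltac:(lia)).
    assert (a n0 = t * INR n0) by (unfold t; field; lra).
    assert (INR q * INR n0 * t <= INR n * t) by (apply Rmult_le_compat_r; auto).
    nra. }
  assert (a n / INR n <= (INR n * t + B) / INR n).
  { apply Rmult_le_compat_r; [left; apply Rinv_0_lt_compat; auto | auto]. }
  replace ((INR n * t + B) / INR n) with (t + B * / INR n) in H0 by (field; lra).
  assert (HinvN : / INR n <= / INR N).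
  { apply Rinv_le_contravar; [apply lt_0_INR; lia | apply le_INR; lia]. }
  assert (B * / INR n <= B * (eps / (2 * (B + 1)))).
  { apply Rmult_le_compat_l; lra. }
  assert (B * (eps / (2 * (B + 1))) <= eps / 2).
  { unfold Rdiv. rewrite -Rmult_assoc.
    assert (Hpos2 : 0 < 2 * (B + 1)) by lra.
    apply (Rmult_le_reg_r (2 * (B + 1))); auto.
    rewrite Rmult_assoc Rinv_l; [nra | lra]. }
  lra. }
apply Rabs_def1; lra.
Qed.

End RealPart.

From mathcomp Require Import all_boot zify.

Lemma squarefreeP (T : eqType) (w : seq T) :
  reflect (forall i l, 0 < l -> i + l + l <= size w ->
             take l (drop i w) != take l (drop (i + l) w))
          (squarefree w).
Proof.
apply: (iffP forallP).
- move=> H i l l0 hb.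
  have hi : i < (size w).+1 by lia.
  have hl : l < (size w).+1 by lia.
  have := H (Ordinal hi); move/forallP => /(_ (Ordinal hl)) /implyP; apply.
  by rewrite /= l0 hb.
- move=> H i; apply/forallP => l; apply/implyP => /andP [l0 hb]; exact: H.
Qed.

Lemma sf_drop (T : eqType) (w : seq T) j : squarefree w -> squarefree (drop j w).
Proof.
move/squarefreeP => H; apply/squarefreeP => i l l0 hb.
rewrite !drop_drop.
rewrite size_drop in hb.
have -> : i + l + j = (i + j) + l by lia.
apply: H => //; lia.
Qed.

Lemma sf_take (T : eqType) (w : seq T) j : squarefree w -> squarefree (take j w).
Proof.
move/squarefreeP => H; apply/squarefreeP => i l l0 hb.
rewrite size_take_min in hb.
have E : forall k, k + l <= j -> take l (drop k (take j w)) = take l (drop k w).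
  move=> k hk. rewrite !take_drop take_takel //.
  by rewrite addnC.
rewrite !E; [| lia | lia].
apply: H => //; lia.
Qed.

Lemma sf_cat_missing (T : eqType) (m s : seq T) :
  uniq m -> (forall a, a \in m -> a \notin s) -> squarefree s -> squarefree (m ++ s).
Proof.
move=> um dis /squarefreeP H; apply/squarefreeP => i l l0 hb.
rewrite size_cat in hb.
case: (leqP (size m) i) => hi.
- rewrite !drop_cat ltnNge hi /= ltnNge (leq_trans hi (leq_addr _ _)) /=.
  have -> : i + l - size m = (i - size m) + l by lia.
  apply: H => //; lia.
- apply/eqP => E.
  case: m um dis hi hb E => [|a0 m'] //. move=> um dis hi hb E.
  set m := a0 :: m' in um dis hi hb E.
  have := congr1 (nth a0 ^~ 0) E.
  rewrite !nth_take // !nth_drop addn0.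
  rewrite nth_cat hi nth_cat.
  case: ltnP => h2.
  + move/eqP; rewrite nth_uniq //; lia.
  + move=> E2. have := dis (nth a0 m i) (mem_nth _ hi).
    rewrite E2 mem_nth //. lia.
Qed.

Lemma card_le_inj (T1 T2 : finType) (A : {set T1}) (B : {set T2}) (f : T1 -> T2) :
  {in A &, injective f} -> (forall a, a \in A -> f a \in B) -> #|A| <= #|B|.
Proof.
move=> inj hB; rewrite -(card_in_imset inj); apply: subset_leq_card.
by apply/subsetP => y /imsetP [a aA ->]; apply: hB.
Qed.

Lemma val_insubd_tuple (T : Type) n (d : n.-tuple T) (s : seq T) :
  size s = n -> val (insubd d s : n.-tuple T) = s.
Proof. by move=> hs; rewrite val_insubd hs eqxx. Qed.

Lemma omega_submult x (a0 : 'I_x) m n :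
  omega_minus x (m + n) <= omega_minus x m * omega_minus x n.
Proof.
rewrite /omega_minus -cardsX.
pose f := fun t : (m + n).-tuple 'I_x =>
  ((insubd (nseq_tuple m a0) (take m t) : m.-tuple 'I_x),
   (insubd (nseq_tuple n a0) (drop m t) : n.-tuple 'I_x)).
have v1 : forall t : (m + n).-tuple 'I_x, val (f t).1 = take m t.
  by move=> t; rewrite val_insubd_tuple // size_takel // size_tuple leq_addr.
have v2 : forall t : (m + n).-tuple 'I_x, val (f t).2 = drop m t.
  by move=> t; rewrite val_insubd_tuple // size_drop size_tuple addKn.
apply: (@card_le_inj _ _ _ _ f).
- move=> t1 t2 _ _ E; apply: val_inj => /=.
  rewrite -(cat_take_drop m t1) -(cat_take_drop m t2) -v1 -v2 -v1 -v2 E //.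
- move=> t; rewrite !inE => sf.
  rewrite -[f t]/((f t).1, (f t).2).
  by rewrite /= v1 v2 sf_take // sf_drop.
Qed.

Section Psi.
Variables (x : nat) (a0 : 'I_x).

Definition mis (s : seq 'I_x) : {set 'I_x} := [set a | a \notin s].

Lemma mis_ex (v : seq 'I_x) : exists j, #|mis (drop j v)| <= j.
Proof. by exists x; rewrite -[X in _ <= X]card_ord max_card. Qed.

Definition jv (v : seq 'I_x) := ex_minn (mis_ex v).

Lemma mis_mono (v : seq 'I_x) k : mis (drop k v) \subset mis (drop k.+1 v).
Proof.
apply/subsetP => a; rewrite !inE; apply: contra.
by rewrite -addn1 addnC -drop_drop => /mem_drop.
Qed.

Lemma jv_prop (v : seq 'I_x) : jv v <= x /\ #|mis (drop (jv v) v)| = jv v.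
Proof.
rewrite /jv; case: ex_minnP => j hj hmin; split.
- apply: hmin; by rewrite -[X in _ <= X]card_ord max_card.
- apply/eqP; rewrite eqn_leq hj /=.
  case: j hj hmin => [|k] // hj hmin.
  have : ~~ (#|mis (drop k v)| <= k).
    by apply/negP => /hmin; rewrite ltnn.
  rewrite -ltnNge => h; apply: leq_trans h _; exact: subset_leq_card (mis_mono v k).
Qed.

Variable n : nat.
Hypothesis hn : x <= n.

Definition uv (v : n.-tuple 'I_x) : n.-tuple 'I_x :=
  insubd (nseq_tuple n a0) (enum (mis (drop (jv v) v)) ++ drop (jv v) v).

Lemma uv_val (v : n.-tuple 'I_x) :
  (uv v : seq 'I_x) = enum (mis (drop (jv v) v)) ++ drop (jv v) v.
Proof.
rewrite [LHS]val_insubd_tuple // size_cat -cardE size_drop size_tuple.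
have [h1 ->] := jv_prop v; lia.
Qed.

Lemma omega_psi : omega_minus x n <= (x.+1 * x ^ x) * psi x n.
Proof.
rewrite /omega_minus /psi.
have -> : x.+1 * x ^ x = #|setX [set: 'I_x.+1] [set: {ffun 'I_x -> 'I_x}]|.
  by rewrite cardsX !cardsT card_ffun !card_ord.
rewrite -cardsX.
pose f := fun v : n.-tuple 'I_x =>
  ((inord (jv v) : 'I_x.+1, [ffun i : 'I_x => nth a0 v i]), uv v).
apply: (@card_le_inj _ _ _ _ f).
- move=> v1 v2 _ _; rewrite /f => -[E1 E2 E3].
  have [hj1 _] := jv_prop v1; have [hj2 _] := jv_prop v2.
  have ej : jv v1 = jv v2.
    by have := congr1 val E1; rewrite /= !inordK.
  have ed : drop (jv v1) v1 = drop (jv v2) v2.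
    have := congr1 (fun u : n.-tuple 'I_x => drop (jv v1) (val u)) E3.
    rewrite /= !uv_val !drop_size_cat // -cardE; [|by case: (jv_prop v1)].
    by rewrite ej; case: (jv_prop v2).
  apply: val_inj => /=.
  rewrite -(cat_take_drop (jv v1) v1) -(cat_take_drop (jv v2) v2) ed -ej.
  congr (_ ++ _).
  apply: (eq_from_nth (x0 := a0)).
    by rewrite !size_takel // !size_tuple; lia.
  move=> i; rewrite size_takel; last by rewrite size_tuple; lia.
  move=> hi; rewrite !nth_take //.
  have hix : i < x by lia.
  have := congr1 (fun g : {ffun 'I_x -> 'I_x} => g (Ordinal hix)) E2.
  by rewrite /= !ffunE.
- move=> v; rewrite !inE => sf.
  rewrite /f /=.
  rewrite uv_val; apply/andP; split.
  + apply: sf_cat_missing; [exact: enum_uniq | | exact: sf_drop].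
    by move=> a; rewrite mem_enum inE.
  + apply/forallP => a; rewrite (_ : (a \in uv v) = (a \in (uv v : seq _))) // uv_val mem_cat mem_enum inE.
    by case: (a \in drop _ _); rewrite ?orbT.
Qed.
End Psi.

Lemma psi_le_omega x n : psi x n <= omega_minus x n.
Proof.
apply: subset_leq_card; apply/subsetP => t; rewrite !inE; by case/andP.
Qed.

Section MainAux.
Local Open Scope R_scope.
Lemma main_aux (x : nat) (hx : (3 <= x)%N) :
  exists L : R,
    Un_cv (fun n : nat => Rdiv (ln (INR (psi x n))) (INR n)) L /\
    Un_cv (fun n : nat => Rdiv (ln (INR (omega_minus x n))) (INR n)) L.
Proof.
have x0 : (0 < x)%N by apply: leq_trans hx.
pose a0 : 'I_x := Ordinal x0.
case: (classic (forall n, (0 < omega_minus x n)%N)) => [Hpos|Hneg].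
- pose a := fun n => ln (INR (omega_minus x n)).
  have Hge1 : forall n, (1 <= INR (omega_minus x n)).
    move=> n; rewrite -[1]/(INR 1); apply: le_INR; apply/leP; exact: Hpos.
  have Ha0 : forall n, (0 <= a n).
    move=> n; rewrite /a -ln_1; apply: ln_le'; [lra | exact: Hge1].
  have Hsub : forall m n, (a (m + n)%N <= a m + a n).
    move=> m n; rewrite /a -ln_mult; [| have := Hge1 m; lra | have := Hge1 n; lra].
    apply: ln_le'; [have := Hge1 (m + n)%N; lra|].
    rewrite -mult_INR; apply: le_INR; apply/leP; exact: omega_submult.
  have [L HL] := fekete a Ha0 Hsub.
  exists L; split; last exact: HL.
  set C := INR (x.+1 * expn x x).
  have HC : (1 <= C).
    rewrite /C -[1]/(INR 1); apply: le_INR; apply/leP.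
    by rewrite muln_gt0 expn_gt0 x0.
  have HlnC : (0 <= ln C) by rewrite -ln_1; apply: ln_le'; lra.
  move=> eps Heps.
  have [N1 HN1] := HL (eps / 2) ltac:(lra).
  have [N2 [HN2 HN20]] := archimed_cor1 (eps / (2 * (ln C + 1)))
       ltac:(apply: Rdiv_lt_0_compat; lra).
  exists (x + N1 + N2)%N => n Hn.
  have Hn1 : (n >= N1)%coq_nat by lia.
  have := HN1 n Hn1; rewrite /R_dist => Hd.
  have Hxn : (x <= n)%N by apply/leP; lia.
  have Hop := @omega_psi x a0 n Hxn.
  have Hpl := psi_le_omega x n.
  have Hps : (0 < psi x n)%N.
    move: (Hpos n) Hop; case: (psi x n) => // ; by rewrite muln0 => /[swap]; rewrite leqn0 => /eqP ->.
  have Hp1 : (1 <= INR (psi x n)).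
    rewrite -[1]/(INR 1); apply: le_INR; apply/leP; exact: Hps.
  have H1 : (ln (INR (psi x n)) <= a n).
    by apply: ln_le'; [lra | apply: le_INR; apply/leP].
  have H2 : (a n <= ln C + ln (INR (psi x n))).
    rewrite -ln_mult; [|lra|lra]; apply: ln_le'; [have := Hge1 n; lra|].
    rewrite /C -mult_INR; apply: le_INR; apply/leP; exact: Hop.
  have HINRn : (0 < INR n) by apply: lt_0_INR; lia.
  have Hinv : (/ INR n <= / INR N2).
    by apply: Rinv_le_contravar; [apply: lt_0_INR; lia | apply: le_INR; lia].
  have HlnCn : (ln C * / INR n <= eps / 2).
    have E1 : (ln C * / INR n <= ln C * (eps / (2 * (ln C + 1)))).
      by apply: Rmult_le_compat_l; lra.
    have E2 : (ln C * (eps / (2 * (ln C + 1))) <= eps / 2).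
      rewrite /Rdiv -Rmult_assoc.
      apply: (Rmult_le_reg_r (2 * (ln C + 1))); first lra.
      rewrite Rmult_assoc Rinv_l; [nra | lra].
    lra.
  have Q1 : (ln (INR (psi x n)) / INR n <= a n / INR n).
    by apply: Rmult_le_compat_r; [left; apply: Rinv_0_lt_compat|].
  have Q2 : (a n / INR n - ln C * / INR n <= ln (INR (psi x n)) / INR n).
    have : ((a n - ln C) / INR n <= ln (INR (psi x n)) / INR n).
      by apply: Rmult_le_compat_r; [left; apply: Rinv_0_lt_compat| lra].
    rewrite /Rdiv Rmult_minus_distr_r //.
  rewrite /R_dist; apply: Rabs_def1.
  + have := Rabs_def2 _ _ Hd; rewrite /a in Q1 Q2 *; lra.
  + have := Rabs_def2 _ _ Hd; rewrite /a in Q1 Q2 *; lra.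
- have [N HN] : exists N, omega_minus x N = 0%N.
    case: (not_all_ex_not _ _ Hneg) => N HN; exists N.
    by move: HN; case: (omega_minus x N).
  have Hz : forall n, (N <= n)%N -> omega_minus x n = 0%N.
    move=> n Hn; apply/eqP; rewrite -leqn0.
    have := @omega_submult x a0 N (n - N); rewrite subnKC // HN mul0n //.
  have Hzp : forall n, (N <= n)%N -> psi x n = 0%N.
    move=> n Hn; apply/eqP; rewrite -leqn0 -(Hz n Hn); exact: psi_le_omega.
  exists 0; split=> eps Heps; exists N => n Hn; rewrite /R_dist.
  + rewrite Hzp; last by apply/leP.
    rewrite /= ln0 /Rdiv Rmult_0_l Rminus_0_r Rabs_R0 //.
  + rewrite Hz; last by apply/leP.
    rewrite /= ln0 /Rdiv Rmult_0_l Rminus_0_r Rabs_R0 //.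
Qed.

End MainAux.

From Stdlib Require Import Reals.

Theorem mainTheorem8 (x : nat) (hx : (3 <= x)%N) :
  exists L : R,
    Un_cv (fun n : nat => (ln (INR (psi x n)) / INR n)%R) L /\
    Un_cv (fun n : nat => (ln (INR (omega_minus x n)) / INR n)%R) L.
Proof. exact: main_aux. Qed.
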